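(* There exist absolute constants $c_1,c_2>0$ such that the following holds for all sufficiently large $n$. Let $t,s$ be integers with $2\le t<s<n/2$, and let $G$ be a graph on $n$ vertices such that every induced subgraph of $G$ on $s$ vertices contains an independent set of size $t$. Let $k=\lfloor \frac{s}{t-1}\rfloor$. Then: (i) if $k\le 2\log n$, then $G$ contains an independent set of size at least $c_1\, k\, n^{1/k}$; (ii) if $k>2\log n$, then $G$ contains an independent set of size at least $c_2\,\frac{\log n}{\log (k/\log n)}$.
   Context: All logarithms are natural. An independent set is a set of pairwise non-adjacent vertices. The $\Omega(\cdot)$ bounds of the paper are expressed here via absolute constants. *)

(* Defs.v *)
From mathcomp Require Import all_boot.
From Stdlib Require Import Reals.
Set Implicit Arguments. Unset Strict Implicit. Unset Printing Implicit Defensive.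

Definition simple_graph (T : finType) (e : rel T) : Prop :=
  symmetric e /\ irreflexive e.

Definition independent (T : finType) (e : rel T) (I : {set T}) : Prop :=
  forall x y, x \in I -> y \in I -> ~~ e x y.

(* Main.v *)
Require Import Defs.
From Stdlib Require Import Reals Lra Lia ZArith Classical.
Local Open Scope R_scope.

Lemma floor_nat (x : R) : 0 <= x -> exists a : nat, INR a <= x < INR a + 1.
Proof.
intros Hx. destruct (base_Int_part x) as [H1 H2].
assert (Hz : (0 <= Int_part x)%Z).
{ assert (-1 < IZR (Int_part x)) by lra.
  apply lt_IZR in H. lia. }
exists (Z.to_nat (Int_part x)).
rewrite INR_IZR_INZ, Z2Nat.id by exact Hz. lra.
Qed.

Lemma ln_le' x y : 0 < x -> x <= y -> ln x <= ln y.
Proof.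
intros Hx Hxy. destruct (Rle_lt_or_eq_dec _ _ Hxy) as [H|H].
- left; apply ln_increasing; auto.
- subst; lra.
Qed.

Lemma ln_le_inv x y : 0 < x -> 0 < y -> ln x <= ln y -> x <= y.
Proof.
intros Hx Hy H. destruct (Rle_or_lt x y) as [h|h]; auto.
assert (ln y < ln x) by (apply ln_increasing; auto). lra.
Qed.

Lemma ln_le_sub1 x : 0 < x -> ln x <= x - 1.
Proof.
intros Hx. pose proof (exp_ineq1_le (ln x)). rewrite exp_ln in H by exact Hx. lra.
Qed.

Lemma ln_lt_self x : 0 < x -> ln x < x.
Proof. intros Hx. pose proof (ln_le_sub1 x Hx). lra. Qed.

Lemma ln2_lt1 : ln 2 < 1.
Proof.
assert (H : 1 + 1 < exp 1) by (apply exp_ineq1; lra).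
pose proof (ln_increasing 2 (exp 1) ltac:(lra) H) as H'. rewrite ln_exp in H'. exact H'.
Qed.

Lemma pow_exp (x : R) (a : nat) : 0 < x -> x ^ a = exp (INR a * ln x).
Proof.
intros Hx. rewrite <- ln_pow by exact Hx. rewrite exp_ln; auto. apply pow_lt; auto.
Qed.

Lemma logbound a A K : 0 < a -> a <= A -> A <= K ->
  a * ln (K / a) <= A * (ln (K / A) + 1).
Proof.
intros Ha HaA HAK.
assert (HA : 0 < A) by lra.
assert (HK : 0 < K) by lra.
assert (E : K / a = (K / A) * (A / a)) by (field; lra).
rewrite E, ln_mult by (apply Rdiv_lt_0_compat; lra).
assert (H1 : ln (A / a) <= A / a - 1) by (apply ln_le_sub1; apply Rdiv_lt_0_compat; lra).
assert (H2 : 0 <= ln (K / A)).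
{ rewrite <- ln_1. apply ln_le'; [lra|]. apply (Rmult_le_reg_r A); auto.
  unfold Rdiv; rewrite Rmult_assoc, Rinv_l by lra. lra. }
assert (H3 : a * (A / a) = A) by (field; lra).
assert (a * ln (A / a) <= A - a).
{ replace (A - a) with (a * (A / a - 1)) by (field; lra).
  apply Rmult_le_compat_l; lra. }
nra.
Qed.

(* (1 + 1/a)^a <= 3 *)
Lemma pow_succ_bound (a : nat) : (1 <= a)%nat -> INR (S a) ^ a <= 3 * INR a ^ a.
Proof.
intros Ha. assert (Hpos : 0 < INR a) by (apply lt_0_INR; lia).
assert (E : INR (S a) = INR a * (1 + / INR a)) by (rewrite S_INR; field; lra).
rewrite E, Rpow_mult_distr.
assert ((1 + / INR a) ^ a <= 3).
{ eapply Rle_trans. apply pow_incr. split. pose proof (Rinv_0_lt_compat _ Hpos); lra.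
  apply exp_ineq1_le.
  rewrite pow_exp by apply exp_pos. rewrite ln_exp.
  rewrite Rinv_r by lra. apply exp_le_3. }
assert (0 <= INR a ^ a) by (apply pow_le; lra).
nra.
Qed.

Local Close Scope R_scope.

From mathcomp Require Import all_boot zify.
Set Implicit Arguments. Unset Strict Implicit. Unset Printing Implicit Defensive.

Local Open Scope R_scope.
Lemma INR_muln m n : INR (m * n)%N = INR m * INR n.
Proof. exact (mult_INR m n). Qed.

Lemma INR_expn m n : INR (m ^ n)%N = INR m ^ n.
Proof. elim: n => [|n IH] //=; by rewrite expnS INR_muln IH. Qed.

Lemma ffact_le_exp n p : (n ^_ p <= n ^ p)%N.
Proof.
elim: p n => [|p IH] n //. rewrite ffactnS expnS leq_mul2l.
case: n => [|n] //=. apply: leq_trans (IH n) _. case: p {IH} => [|p]; [by rewrite !expn0 | by rewrite leq_exp2r].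
Qed.



Lemma fact_bound (a : nat) : INR a ^ a <= 3 ^ a * INR (a`!).
Proof.
elim: a => [|a IH]. simpl; lra.
rewrite factS INR_muln.
have Hf : 0 <= INR a`! by apply pos_INR.
case: a IH Hf => [|a] IH Hf.
  simpl. lra.
have := pow_succ_bound a.+1 (ltac:(lia)).
have Hp : 0 < INR a.+2 by apply lt_0_INR; lia.
move=> H.
have -> : INR a.+2 ^ a.+2 = INR a.+2 * INR a.+2 ^ a.+1 by [].
have -> : 3 ^ a.+2 = 3 * 3 ^ a.+1 by [].
have : INR a.+2 ^ a.+1 <= 3 * (3 ^ a.+1 * INR (a.+1)`!) by nra.
nra.
Qed.

Lemma binom_bound n p : (0 < p)%N -> INR 'C(n, p) <= (3 * INR n / INR p) ^ p.
Proof.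
move=> p0.
have Hp : 0 < INR p by apply lt_0_INR; lia.
have H1 : INR 'C(n, p) * INR p`! <= INR n ^ p.
  rewrite -INR_muln -INR_expn bin_ffact. apply le_INR. apply/leP. exact: ffact_le_exp.
have H2 := fact_bound p.
have Hpp : 0 < INR p ^ p by apply pow_lt.
have Hc : 0 <= INR 'C(n, p) by apply pos_INR.
have E : (3 * INR n / INR p) ^ p = 3 ^ p * INR n ^ p / INR p ^ p.
  rewrite /Rdiv !Rpow_mult_distr pow_inv. lra.
rewrite E. apply (Rmult_le_reg_r (INR p ^ p)) => //.
rewrite /Rdiv Rmult_assoc Rinv_l; last by lra.
have H3 : 0 < 3 ^ p by apply pow_lt; lra.
nra.
Qed.

Local Close Scope R_scope.

Definition clique (T : finType) (e : rel T) (C : {set T}) : Prop :=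
  forall x y, x \in C -> y \in C -> x != y -> e x y.

Lemma subset_of_card (T : finType) (A : {set T}) m :
  m <= #|A| -> exists B : {set T}, B \subset A /\ #|B| = m.
Proof.
move/card_geqP=> [s [us ss sub]].
exists [set x in s]; split.
  by apply/subsetP=> x; rewrite !inE => /sub.
by rewrite cardsE (card_uniqP us) ss.
Qed.

Lemma ramsey (T : finType) (e : rel T) : symmetric e -> irreflexive e ->
  forall k a (S : {set T}), 'C(k + a, k) <= #|S| ->
  (exists C : {set T}, C \subset S /\ clique e C /\ #|C| = k.+1) \/
  (exists I : {set T}, I \subset S /\ independent e I /\ #|I| = a.+1).
Proof.
move=> esym eirr.
have pick1 : forall S : {set T}, 0 < #|S| -> exists v, v \in S.
  by move=> S /card_gt0P [v Hv]; exists v.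
elim=> [|k IHk] a S.
  rewrite bin0 => /pick1 [v Hv]; left; exists [set v]; split.
    by rewrite sub1set.
  split; last by rewrite cards1.
  by move=> x y; rewrite !inE => /eqP -> /eqP ->; rewrite eqxx.
elim: a S => [|a IHa] S.
  rewrite addn0 binn => /pick1 [v Hv]; right; exists [set v]; split.
    by rewrite sub1set.
  split; last by rewrite cards1.
  by move=> x y; rewrite !inE => /eqP -> /eqP ->; rewrite eirr.
move=> HC.
have /pick1 [v Hv] : 0 < #|S|.
  by apply: leq_trans HC; rewrite bin_gt0 leq_addr.
pose N := (S :\ v) :&: [set y | e v y].
pose M := (S :\ v) :\: [set y | e v y].
have cS : #|S| = 1 + (#|N| + #|M|).
  by rewrite (cardsD1 v S) Hv (cardsID [set y | e v y] (S :\ v)).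
have HN : forall y, y \in N -> (y \in S) && e v y.
  by move=> y; rewrite !inE => /andP [/andP [_ ->] ->].
have HM : forall y, y \in M -> [&& y \in S, y != v & ~~ e v y].
  by move=> y; rewrite !inE => /andP [-> /andP [-> ->]].
have vN : v \notin N by rewrite !inE eqxx.
have vM : v \notin M by rewrite !inE eqxx /= andbF.
move: HC; rewrite addSn binS cS => HC.
have [HN'|HN'] := leqP 'C(k + a.+1, k) #|N|.
  case: (IHk a.+1 N HN') => [[C [CN [cC nC]]]|[I [IN [iI nI]]]].
    left; exists (v |: C); split.
      apply/subsetP=> x; rewrite !inE => /orP [/eqP ->//|/(subsetP CN)/HN/andP[]//].
    split.
      move=> x y; rewrite !inE => /orP [/eqP ->|xC] /orP [/eqP ->|yC].
      - by rewrite eqxx.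
      - by move=> _; have /HN/andP[] := subsetP CN y yC.
      - by move=> _; rewrite esym; have /HN/andP[] := subsetP CN x xC.
      - exact: cC.
    rewrite cardsU1 nC; have -> : v \notin C by apply: contra vN => /(subsetP CN).
    by [].
  right; exists I; split; last by [].
  by apply: subset_trans IN _; apply/subsetP=> y /HN/andP[].
have HM' : 'C(k.+1 + a, k.+1) <= #|M|.
  rewrite addSnnS; move: HC; lia.
case: (IHa M HM') => [[C [CM [cC nC]]]|[I [IM [iI nI]]]].
  left; exists C; split; last by [].
  by apply: subset_trans CM _; apply/subsetP=> y /HM/andP[].
right; exists (v |: I); split.
  apply/subsetP=> x; rewrite !inE => /orP [/eqP ->//|/(subsetP IM)/HM/andP[]//].
split.
  move=> x y; rewrite !inE => /orP [/eqP ->|xI] /orP [/eqP ->|yI].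
  - by rewrite eirr.
  - by have /HM/and3P[] := subsetP IM y yI.
  - by rewrite esym; have /HM/and3P[] := subsetP IM x xI.
  - exact: iI.
rewrite cardsU1 nI; have -> : v \notin I by apply: contra vM => /(subsetP IM).
by [].
Qed.

Lemma clique_indep_le1 (T : finType) (e : rel T) (C I : {set T}) :
  clique e C -> independent e I -> #|I :&: C| <= 1.
Proof.
move=> cC iI; apply/card_le1_eqP=> x y; rewrite !inE => /andP [xI xC] /andP [yI yC].
apply/eqP; apply/negPn/negP=> nxy.
by move: (iI x y xI yI); rewrite (cC x y xC yC); last by rewrite eq_sym.
Qed.

Lemma greedy (T : finType) (e : rel T) t s k :
  (forall S : {set T}, #|S| = s ->
     exists I : {set T}, I \subset S /\ independent e I /\ #|I| = t) ->
  0 < t -> s <= (t - 1) * k.+1 ->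
  exists (U : {set T}) j, j.+1 < t /\ #|U| = j * k.+1 /\
     (forall C : {set T}, C \subset ~: U -> clique e C -> #|C| <> k.+1).
Proof.
move=> Hs t0 st.
suff H : forall d j (U : {set T}), j + d = t - 1 -> #|U| = j * k.+1 ->
   (forall I : {set T}, I \subset U -> independent e I -> #|I| <= j) ->
   exists (U : {set T}) j, j.+1 < t /\ #|U| = j * k.+1 /\
     (forall C : {set T}, C \subset ~: U -> clique e C -> #|C| <> k.+1).
  apply: (H (t - 1) 0 set0) => //; first by rewrite cards0.
  by move=> I /subset_leq_card; rewrite cards0.
elim=> [|d IH] j U jd cU iU.
  have : s <= #|U| by rewrite cU; move: jd; rewrite addn0 => ->.
  move/subset_of_card=> [S [SU cS]].
  have [I [IS [iI cI]]] := Hs S cS.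
  have := iU I (subset_trans IS SU) iI; rewrite cI; lia.
case: (classic (exists C : {set T}, C \subset ~: U /\ clique e C /\ #|C| = k.+1)).
  move=> [C [CU [cC nC]]].
  apply: (IH j.+1 (U :|: C)); first by lia.
    rewrite cardsU.
    have -> : U :&: C = set0.
      apply/setP=> x; rewrite !inE; apply/negP=> /andP [xU xC].
      by have := subsetP CU x xC; rewrite inE xU.
    by rewrite cards0 subn0 cU nC mulSn addnC.
  move=> I IUC iI.
  have -> : I = (I :&: U) :|: (I :&: C).
    apply/setP=> x; rewrite !inE; case xI: (x \in I) => //=.
    by have := subsetP IUC x xI; rewrite inE.
  apply: leq_trans (leq_card_setU _ _).1 _.
  have h1 := iU (I :&: U) (subsetIr _ _) (fun x y hx hy => iI x y (subsetP (subsetIl I U) x hx) (subsetP (subsetIl I U) y hy)).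
  have h2 := clique_indep_le1 cC iI.
  lia.
move=> nC; exists U, j; split; first by lia.
split=> // C CU cC nC'; apply: nC; exists C; done.
Qed.

Local Open Scope R_scope.
Lemma INR_addn m n : INR (m + n)%N = INR m + INR n.
Proof. exact (plus_INR m n). Qed.

Lemma ln2_gt : / 2 < ln 2. Proof. exact ln_lt_2. Qed.

Lemma ln_pow2 (m : nat) : ln (2 ^ m) = INR m * ln 2.
Proof. apply: ln_pow; lra. Qed.

Lemma key (n k a : nat) (A : R) : (1 <= a)%N -> (a <= k)%N -> INR a <= A ->
  A <= 6 * INR k -> (0 < n)%N ->
  A * (ln (6 * INR k / A) + 1) <= ln (INR n) - 2 * ln 2 ->
  INR 'C(k + a, a) <= INR n / 4.
Proof.
move=> a1 ak aA Ak n0 H.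
have Ha : 0 < INR a by apply: lt_0_INR; lia.
have Hk : INR a <= INR k by apply: le_INR; lia.
have Hn : 0 < INR n by apply: lt_0_INR; lia.
apply: Rle_trans (binom_bound (k + a) a1) _.
have Hq : 0 < 3 * INR (k + a) / INR a.
  rewrite INR_addn; apply: Rdiv_lt_0_compat => //; lra.
have H1 : 3 * INR (k + a) / INR a <= 6 * INR k / INR a.
  rewrite INR_addn /Rdiv; apply: Rmult_le_compat_r.
    by left; apply: Rinv_0_lt_compat.
  lra.
apply: Rle_trans (pow_incr _ _ _ (conj (Rlt_le _ _ Hq) H1)) _.
have Hq2 : 0 < 6 * INR k / INR a by apply: Rdiv_lt_0_compat => //; lra.
rewrite pow_exp //.
have H2 := logbound (INR a) A (6 * INR k) Ha aA Ak.
have E : INR n / 4 = exp (ln (INR n) - 2 * ln 2).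
  rewrite exp_plus exp_Ropp exp_ln //.
  have -> : 2 * ln 2 = ln (2 * 2) by rewrite ln_mult; lra.
  rewrite exp_ln; lra.
rewrite E.
have [Hlt|Heq] := Rle_lt_or_eq_dec _ _ (Rle_trans _ _ _ H2 H).
  by left; apply: exp_increasing.
by rewrite Heq; right.
Qed.

Lemma INR_leq (m n : nat) : (m <= n)%N -> INR m <= INR n.
Proof. by move=> h; apply: le_INR; apply/leP. Qed.

Lemma leq_INR (m n : nat) : INR m <= INR n -> (m <= n)%N.
Proof. by move=> h; apply/leP; apply: INR_le. Qed.

Lemma common (n : nat) : (16 <= n)%N ->
  16 <= INR n /\ 4 * ln 2 <= ln (INR n) /\ / 2 < ln 2 /\ ln 2 < 1.
Proof.
move=> h.
have H16 : 16 <= INR n.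
  have := INR_leq h. have -> : INR 16 = 16 by rewrite /=; lra. done.
split=> //; split; last by split; [exact: ln2_gt | exact: ln2_lt1].
have -> : 4 * ln 2 = ln (2 ^ 4) by rewrite ln_pow2 /=; lra.
apply: ln_le'; first by apply: pow_lt; lra.
have -> : (2 ^ 4 = 16)%R by rewrite /=; lra. done.
Qed.

Lemma binC0 k : INR 'C(k + 0, 0) = 1.
Proof. by rewrite bin0. Qed.

Lemma part_i (n k : nat) (P : nat -> Prop) :
  (16 <= n)%N -> (2 <= k)%N -> INR k <= 2 * ln (INR n) ->
  (forall a, INR 'C(k + a, a) <= INR n / 4 -> P a) ->
  exists a, P a /\ 1/4800 * INR k * Rpower (INR n) (/ INR k) <= INR a.+1.
Proof.
move=> n16 k2 kL HP.
have [H16 [HL [Hl2 Hl2']]] := common n16.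
have Hn : 0 < INR n by lra.
have Hk : 2 <= INR k.
  have := INR_leq k2. have -> : INR 2 = 2 by rewrite /=; lra. done.
set L := ln (INR n) in HL kL HP *.
set y := Rpower (INR n) (/ INR k).
have ypos : 0 < y by rewrite /y /Rpower; apply: exp_pos.
have lny : ln y = L / INR k by rewrite /y /Rpower ln_exp /L /Rdiv Rmult_comm.
have ypow : y ^ k = INR n.
  rewrite /y -Rpower_pow // Rpower_mult Rinv_l; last by lra.
  by rewrite Rpower_1.
have [y24|y24] := Rle_or_lt 24 y.
  have x0 : 0 <= INR k * (y / 12 - 1) by nra.
  have [a [ax xa]] := floor_nat _ x0.
  exists a; split; last first.
    rewrite S_INR.
    have : 24 * INR k <= INR k * y by nra.
    nra.
  apply: HP.
  have Eb : 'C(k + a, a) = 'C(k + a, k).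
    by have := bin_sub (leq_addl k a); rewrite addnK.
  rewrite Eb.
  have k0 : (0 < k)%N by lia.
  apply: Rle_trans (binom_bound (k + a) k0) _.
  have Hq : 0 <= 3 * INR (k + a) / INR k.
    rewrite INR_addn; left; apply: Rdiv_lt_0_compat; [|lra].
    have := pos_INR a; lra.
  have H1 : 3 * INR (k + a) / INR k <= y / 4.
    rewrite INR_addn.
    apply: (Rle_trans _ (3 * (INR k * y / 12) * / INR k)).
      rewrite /Rdiv; apply: Rmult_le_compat_r.
        by left; apply: Rinv_0_lt_compat; lra.
      lra.
    right; field; lra.
  apply: Rle_trans (pow_incr _ _ _ (conj Hq H1)) _.
  rewrite /Rdiv Rpow_mult_distr ypow pow_inv.
  apply: Rmult_le_compat_l; first lra.
  apply: Rinv_le_contravar; first lra.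
  have := Rle_pow 4 1 k (ltac:(lra)) (ltac:(apply/leP; lia)).
  by rewrite /=; lra.
have L0 : 0 < L by lra.
have lnyb : L / INR k < 5.
  rewrite -lny.
  apply: (Rlt_le_trans _ (ln 24)); first by apply: ln_increasing.
  apply: (Rle_trans _ (ln (2 ^ 5))).
    apply: ln_le'; first lra. by rewrite /=; lra.
  rewrite ln_pow2 /=; lra.
have L5 : L < 5 * INR k.
  have E : L = L / INR k * INR k by field; lra.
  rewrite E; nra.
have A0 : 0 <= L / 100 by lra.
have [a [ax xa]] := floor_nat _ A0.
exists a; split; last first.
  rewrite S_INR.
  have : INR k * y <= 2 * L * 24 by apply: Rmult_le_compat; lra.
  lra.
apply: HP.
case: a ax xa => [|a] ax xa.
  rewrite binC0; lra.
apply: (key (A := L / 100)) => //.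
- apply: leq_INR; lra.
- lra.
- lia.
have Hq : 0 < 6 * INR k / (L / 100) by apply: Rdiv_lt_0_compat; lra.
have Hq2 : 6 * INR k / (L / 100) <= 1200.
  apply: (Rmult_le_reg_r (L / 100)); first lra.
  rewrite /Rdiv Rmult_assoc Rinv_l; last by lra.
  lra.
have Hln : ln (6 * INR k / (L / 100)) <= 11.
  apply: (Rle_trans _ (ln (2 ^ 11))).
    apply: ln_le' => //. by rewrite /=; lra.
  rewrite ln_pow2 /=; lra.
have : L / 100 * (ln (6 * INR k / (L / 100)) + 1) <= L / 100 * 12.
  apply: Rmult_le_compat_l; lra.
rewrite -/L; lra.
Qed.

Lemma part_ii (n k : nat) (P : nat -> Prop) :
  (16 <= n)%N -> 2 * ln (INR n) < INR k ->
  (forall a, INR 'C(k + a, a) <= INR n / 4 -> P a) ->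
  exists a, P a /\ 1/100 * (ln (INR n) / ln (INR k / ln (INR n))) <= INR a.+1.
Proof.
move=> n16 kL HP.
have [H16 [HL [Hl2 Hl2']]] := common n16.
set L := ln (INR n) in HL kL HP *.
have L0 : 0 < L by lra.
have r2 : 2 < INR k / L.
  apply: (Rmult_lt_reg_r L) => //.
  rewrite /Rdiv Rmult_assoc Rinv_l; lra.
set r := INR k / L in r2 *.
have lr2 : ln 2 < ln r by apply: ln_increasing; lra.
set lr := ln r in lr2 *.
have lr0 : 0 < lr by lra.
set A := 1 / 100 * (L / lr).
have Alr : A * lr = L / 100 by rewrite /A; field; lra.
have A0 : 0 <= A by rewrite /A; apply: Rmult_le_pos; [lra|]; left; apply: Rdiv_lt_0_compat.
have AL : A < L / 50 by nra.
have [a [ax xa]] := floor_nat _ A0.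
exists a; split; last by rewrite S_INR -/A; lra.
apply: HP.
case: a ax xa => [|a] ax xa.
  rewrite binC0; lra.
have A1 : 0 < A by have := pos_INR a; rewrite S_INR in ax; lra.
apply: (key (A := A)) => //.
- apply: leq_INR; lra.
- lra.
- lia.
have E : 6 * INR k / A = 600 * r * lr.
  rewrite /r; apply: (Rmult_eq_reg_r A); last lra.
  rewrite /Rdiv Rmult_assoc Rinv_l; last lra.
  have -> : 600 * (INR k * / L) * lr * A = 600 * (INR k * / L) * (A * lr) by ring.
  rewrite Alr; field; lra.
rewrite E ln_mult; [|nra|lra].
rewrite ln_mult; [|lra|lra].
have H600 : ln 600 <= 10.
  apply: (Rle_trans _ (ln (2 ^ 10))).
    apply: ln_le'; first lra. by rewrite /=; lra.
  rewrite ln_pow2 /=; lra.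
have Hll : ln lr < lr by apply: ln_lt_self.
have : A * (ln 600 + lr + ln lr + 1) <= A * (11 + 2 * lr).
  apply: Rmult_le_compat_l; lra.
have H2 : A * (11 + 2 * lr) = 11 * A + 2 * (L / 100) by rewrite -Alr; ring.
rewrite -/lr -/L.

lra.
Qed.

Local Close Scope R_scope.

From mathcomp Require Import all_boot.
Delimit Scope R_scope with R.
Delimit Scope nat_scope with N.

Theorem theorem2p1 :
  exists c1 c2 : R, (0 < c1)%R /\ (0 < c2)%R /\
  exists N : nat, forall n : nat, (N <= n)%N ->
  forall t s : nat, (2 <= t)%N -> (t < s)%N -> (2 * s < n)%N ->
  forall e : rel 'I_n, simple_graph e ->
  (forall S : {set 'I_n}, #|S| = s ->
     exists I : {set 'I_n}, I \subset S /\ independent e I /\ #|I| = t) ->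
  let k := (s %/ (t - 1))%N in
  ((INR k <= 2 * ln (INR n))%R ->
     exists I : {set 'I_n}, independent e I /\
       (c1 * INR k * Rpower (INR n) (/ INR k) <= INR #|I|)%R) /\
  ((2 * ln (INR n) < INR k)%R ->
     exists I : {set 'I_n}, independent e I /\
       (c2 * (ln (INR n) / ln (INR k / ln (INR n))) <= INR #|I|)%R).
Proof.
exists (1/4800)%R, (1/100)%R; split; first lra; split; first lra.
exists 16%N => n n16 t s t2 ts sn e [esym eirr] Hs k.
have t1 : (0 < t - 1)%N by lia.
have k1 : (0 < k)%N by rewrite /k divn_gt0 //; lia.
have hk : ((t - 1) * k <= s)%N by rewrite mulnC; exact: leq_divM.
have hs : (s <= (t - 1) * k.+1)%N.
  by have := ltn_ceil s t1; rewrite -/k mulnC; lia.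
have [U [j [jt [cU noC]]]] := greedy Hs (ltnW t2) hs.
set R := ~: U.
have cR : #|R| = (n - j * k.+1)%N.
  by have := cardsC U; rewrite card_ord cU -/R; lia.
have HR : forall a, ('C(k + a, k) <= #|R|)%N ->
    exists I : {set 'I_n}, independent e I /\ #|I| = a.+1.
  move=> a /(ramsey esym eirr) [[C [CR [cC nC]]]|[I [IR [iI nI]]]].
    by exfalso; exact: (noC C CR cC nC).
  by exists I.
have Hcond : (2 <= k)%N -> forall a, (INR 'C(k + a, a) <= INR n / 4)%R ->
    exists I : {set 'I_n}, independent e I /\ #|I| = a.+1.
  move=> k2 a Ha; apply: HR.
  have Eb : 'C(k + a, a) = 'C(k + a, k).
    by have := bin_sub (leq_addl k a); rewrite addnK.
  rewrite -Eb; apply: leq_INR.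
  have h1 : (j * k.+1 <= (t - 2) * k + (t - 2))%N.
    rewrite addnC -mulnS; apply: leq_mul => //; lia.
  have h2 : ((t - 2) * k + k <= s)%N.
    move: hk; have -> : (t - 1 = (t - 2).+1)%N by lia.
    by rewrite mulSn addnC.
  have h3 : (2 * (t - 1) <= s)%N.
    by apply: leq_trans hk; rewrite mulnC leq_mul2l k2 orbT.
  have h4 : (n <= 4 * #|R|)%N by rewrite cR; lia.
  have := INR_leq h4. rewrite INR_muln.
  have -> : INR 4 = 4%R by rewrite /=; lra.
  lra.
split.
- move=> kL.
  have [k2|k1'] := leqP 2 k.
    have [a [[I [iI nI]] Hb]] := part_i n16 k2 kL (Hcond k2).
    by exists I; split => //; rewrite nI.
  have ek : k = 1%N by lia.
  have iR : independent e R.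
    move=> x y xR yR; case: (eqVneq x y) => [->|nxy]; first by rewrite eirr.
    apply/negP=> exy; apply: (noC [set x; y]).
    + by apply/subsetP=> z; rewrite in_set2 => /orP [/eqP ->|/eqP ->].
    + move=> u v; rewrite !in_set2 => /orP [/eqP ->|/eqP ->] /orP [/eqP ->|/eqP ->] //.
      - by rewrite eqxx.
      - by rewrite esym.
      - by rewrite eqxx.
    + by rewrite cards2 nxy ek.
  have [S [_ cS]] := subset_of_card (A := [set: 'I_n]) (m := s) (ltac:(rewrite cardsT card_ord; lia)).
  have [I0 [_ [iI0 nI0]]] := Hs S cS.
  have Hbig : (n <= 3 * #|R|)%N \/ (n <= 3 * #|I0|)%N.
    rewrite cR nI0 ek; lia.
  have Rk : (1 / 4800 * INR k * Rpower (INR n) (/ INR k) = INR n / 4800)%R.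
    rewrite ek /= Rinv_1 Rpower_1; first lra.
    apply: lt_0_INR; lia.
  rewrite Rk.
  case: Hbig => h.
    exists R; split => //. have := INR_leq h; rewrite INR_muln.
    have -> : INR 3 = 3%R by rewrite /=; lra.
    have := pos_INR n; lra.
  exists I0; split => //. have := INR_leq h; rewrite INR_muln.
  have -> : INR 3 = 3%R by rewrite /=; lra.
  have := pos_INR n; lra.
- move=> kL.
  have [H16 [HL [Hl2 Hl2']]] := common n16.
  have k2 : (2 <= k)%N.
    apply: leq_INR. have -> : INR 2 = 2%R by rewrite /=; lra. lra.
  have [a [[I [iI nI]] Hb]] := part_ii n16 kL (Hcond k2).
  by exists I; split => //; rewrite nI.
Qed.
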